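(* Let $D$ be a compact state space, let $A,B\subset D$ be disjoint nonempty closed sets with $A\cup B\subsetneq D$, and let $f:D\times D\to[0,\infty)$ satisfy the conditions listed in the context. Let $z^*$ be the $A$-$B$ competency of $f$, and assume that $L_{z^*}$ is $A$-$B$ connected. Then for every $z\in(0,z^*]$, every integer $n\ge N(z)$ and every $0\le i\le n$, \[ W^{n,i}_z=\pi_i\big(\mathbb{G}_n(L_z)\big). \] That is: (1) for every $\alpha\in W^{n,i}_z$ there exists a transition path $\vec\omega=(\omega_0,\dots,\omega_n)\in\mathbb{G}_n(L_z)$ with $\omega_i=\alpha$; and (2) for every $\vec\omega=(\omega_0,\dots,\omega_n)\in\mathbb{G}_n(L_z)$ one has $\omega_j\in W^{n,j}_z$ for all $0\le j\le n$.
   Context: Conditions on $f$: (i) $f(x,y)\ge 0$ for all $(x,y)\in D\times D$, and $f(x,y)=0$ whenever $x\in B$ (and $y\in D$) or whenever $y\in A$ (and $x\in D$); (ii) $f(x,x)=0$ for all $x\in D$; (iii) for every $x\in D\setminus(A\cup B)$, $\int_D f(x,y)\,dy=\int_D f(y,x)\,dy$; (iv) $f$ is bounded and piecewise continuous on $D\times D$. An $A$-$B$ transition path of length $n\in\mathbb{N}$ is a tuple $\vec\omega=(\omega_0,\omega_1,\dots,\omega_n)\in D^{n+1}$ with $\omega_0\in A$, $\omega_n\in B$ and $f(\omega_k,\omega_{k+1})>0$ for $0\le k\le n-1$; its edges are the pairs $(\omega_k,\omega_{k+1})$. For a set $\mathcal C\subset D\times D$, $\mathbb{G}_n(\mathcal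 C)$ denotes the set of all $A$-$B$ transition paths of length $n$ all of whose edges lie in $\mathcal C$, and $\mathcal C$ is called $A$-$B$ connected if $\bigcup_n\mathbb{G}_n(\mathcal C)\neq\emptyset$. For $z\ge0$ let $L_z=\{(x,y)\in D\times D: f(x,y)\ge z\}$. The $A$-$B$ competency of $f$ is $z^*=\sup\{z\ge0: L_z \text{ is } A\text{-}B\text{ connected}\}$. For $z>0$ and $C\subset D$ define $\Phi_z(C)=\bigcup_{x\in C}\{y\in D:(x,y)\in L_z\}$, $\Phi_z^0(C)=C$, $\Phi_z^m(C)=\Phi_z(\Phi_z^{m-1}(C))$. Let $N(z)=\min\{n\ge1:\Phi_z^n(A)\cap B\neq\emptyset\}$. For $n\ge N(z)$ define $W^{n,n}_z=\Phi^n_z(A)\cap B$ and recursively, for $0\le i<n$, $W^{n,i}_z=\{x\in\Phi^i_z(A):\Phi_z(\{x\})\cap W^{n,i+1}_z\neq\emptyset\}$. For $\vec\omega=(\omega_0,\dots,\omega_n)$, $\pi_i(\vec\omega)=\omega_i$ is the canonical projection. *)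

(* Defs.v *)
From HB Require Import structures.
From mathcomp Require Import all_boot all_order all_algebra.
From mathcomp Require Import all_classical all_reals all_analysis.
Unset Printing Implicit Defensive.
Import Order.TTheory GRing.Theory Num.Theory.
Local Open Scope classical_set_scope.
Local Open Scope ring_scope.

Section TPT.
Context {R : realType} {X : ptopologicalType}.
Variables (D A B : set X) (f : X -> X -> R).

Definition tp_edge (n : nat) (w : 'I_n.+1 -> X) (k : 'I_n) : X * X :=
  (w (widen_ord (leqnSn n) k), w (lift ord0 k)).

Definition transition_path (n : nat) (w : 'I_n.+1 -> X) : Prop :=
  (forall k, D (w k)) /\ A (w ord0) /\ B (w ord_max) /\
  (forall k : 'I_n, 0 < f (tp_edge n w k).1 (tp_edge n w k).2).

Definition Gpaths (n : nat) (C : set (X * X)) : set ('I_n.+1 -> X) :=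
  [set w | transition_path n w /\ forall k : 'I_n, C (tp_edge n w k)].

Definition AB_connected (C : set (X * X)) : Prop :=
  exists n, Gpaths n C !=set0.

Definition Lset (z : R) : set (X * X) :=
  [set p | D p.1 /\ D p.2 /\ z <= f p.1 p.2].

Definition competency : R :=
  sup [set z : R | 0 <= z /\ AB_connected (Lset z)].

Definition Phi (z : R) (C : set X) : set X :=
  [set y | D y /\ exists2 x, C x & Lset z (x, y)].

Definition Phin (z : R) (m : nat) (C : set X) : set X := iter m (Phi z) C.

Definition is_Nz (z : R) (N : nat) : Prop :=
  (1 <= N)%N /\ (Phin z N A `&` B !=set0) /\
  (forall m, (1 <= m)%N -> Phin z m A `&` B !=set0 -> (N <= m)%N).

(* Wrec z n k = W^{n, n-k}_z *)
Fixpoint Wrec (z : R) (n k : nat) : set X :=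
  match k with
  | 0 => Phin z n A `&` B
  | k'.+1 => [set x | Phin z (n - k) A x /\ Phi z [set x] `&` Wrec z n k' !=set0]
  end.

Definition W (z : R) (n i : nat) : set X := Wrec z n (n - i).

Definition bounded_on_DxD : Prop :=
  exists M : R, forall x y, D x -> D y -> `|f x y| <= M.

Definition piecewise_continuous_on_DxD : Prop :=
  exists (k : nat) (P : 'I_k -> set (X * X)),
    (forall j, (<<s @open (X * X)%type >>) (P j)) /\
    (D `*` D `<=` \bigcup_j P j) /\
    (forall j, {within P j, continuous (fun p : X * X => (f p.1 p.2 : R^o))}).
End TPT.

(* Main.v *)
Require Import Defs.
From HB Require Import structures.
From mathcomp Require Import all_boot all_order all_algebra.
From mathcomp Require Import all_classical all_reals all_analysis.
Import Order.TTheory GRing.Theory Num.Theory.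
Local Open Scope classical_set_scope.
Local Open Scope ring_scope.

Section Aux.
Context {R : realType} {X : ptopologicalType}.
Variables (D A B : set X) (f : X -> X -> R) (z : R).

Definition Lz := Lset D f z.

Lemma phin_path i x : Phin D f z i A x ->
  exists g : nat -> X, [/\ A (g 0%N), g i = x &
     forall k, (k < i)%N -> Lz (g k, g k.+1)].
Proof.
elim: i x => [|i IH] x /=.
  by move=> Ax; exists (fun _ => x); split.
case=> Dx [y /IH [g [Ag gi Hg]] Lyx].
exists (fun k => if (k <= i)%N then g k else x); split => //.
- by rewrite ltnn.
move=> k; rewrite ltnS => kle; rewrite kle.
have [->|kne] := eqVneq k i; first by rewrite ltnn gi.
have ki : (k < i)%N by rewrite ltn_neqAle kne kle.
by rewrite ki; apply: Hg.
Qed.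

Lemma path_phin (g : nat -> X) i : A (g 0%N) ->
  (forall k, (k < i)%N -> Lz (g k, g k.+1)) -> Phin D f z i A (g i).
Proof.
move=> Ag; elim: i => [|i IH] H //=.
have Hi := H i (ltnSn i).
split; first by case: Hi => _ [].
exists (g i) => //; apply: IH => k ki; apply: H; exact: ltnW.
Qed.

Lemma wrec_path n k x : Wrec D A B f z n k x ->
  Phin D f z (n - k) A x /\
  exists h : nat -> X, [/\ h 0%N = x, B (h k) &
     forall j, (j < k)%N -> Lz (h j, h j.+1)].
Proof.
elim: k x => [|k IH] x /=.
  by case=> Px Bx; rewrite subn0; split=> //; exists (fun _ => x); split.
case=> Px [y [[Dy [x' -> Lxy]] /IH [_ [h [h0 Bh Hh]]]]].
split => //.
exists (fun j => if j is j'.+1 then h j' else x); split => //.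
case=> [_|j] /=; first by rewrite h0.
by rewrite ltnS; apply: Hh.
Qed.

Lemma path_wrec n (p : nat -> X) : A (p 0%N) -> B (p n) ->
  (forall k, (k < n)%N -> Lz (p k, p k.+1)) ->
  forall k j, (j + k = n)%N -> Wrec D A B f z n k (p j).
Proof.
move=> Ap Bp Hp; elim=> [|k IH] j /=.
  rewrite addn0 => jn; subst n; split => //.
  by apply: path_phin => // k kj; apply: Hp.
move=> jk.
have jn : (j + k.+1 <= n)%N by rewrite jk.
have -> : (n - k.+1 = j)%N by rewrite -jk addnK.
split.
  apply: path_phin => // m mj; apply: Hp.
  apply: (leq_trans mj); apply: leq_trans _ jn; exact: leq_addr.
have Hj : Lz (p j, p j.+1) by apply: Hp; apply: leq_trans jn; rewrite addnS ltnS leq_addr.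
exists (p j.+1); split.
  split; first by case: Hj => _ [].
  by exists (p j).
by apply: IH; rewrite addSnnS.
Qed.

Lemma nat_to_G n (p : nat -> X) : 0 < z -> A `<=` D ->
  A (p 0%N) -> B (p n) ->
  (forall k, (k < n)%N -> Lz (p k, p k.+1)) ->
  Gpaths D A B f n (Lset D f z) (fun k : 'I_n.+1 => p k).
Proof.
move=> z0 AD Ap Bp Hp.
have Hk : forall k : 'I_n, Lset D f z (tp_edge n (fun k : 'I_n.+1 => p k) k).
  by move=> k; rewrite /tp_edge /= /bump leq0n add1n; apply: Hp.
split => //; split; last first.
  split => //; split => // k; case: (Hk k) => _ [_ h].
  exact: lt_le_trans h.
case=> k /=; case: k => [|k] kn; first exact: AD.
by case: (Hp k kn) => _ [].
Qed.

Lemma G_to_nat n (w : 'I_n.+1 -> X) : Gpaths D A B f n (Lset D f z) w ->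
  [/\ A (w (inord 0)), B (w (inord n)) &
  forall k, (k < n)%N -> Lz (w (inord k), w (inord k.+1))].
Proof.
case=> [[_ [Aw [Bw _]]] He]; split.
- by rewrite (_ : inord 0 = ord0) //; apply: val_inj; rewrite /= inordK.
- by rewrite (_ : inord n = ord_max) //; apply: val_inj; rewrite /= inordK.
move=> k kn; have := He (Ordinal kn); rewrite /tp_edge.
congr (Lz (w _, w _)); apply: val_inj; rewrite /= ?lift0 inordK //.
exact: ltnW.
Qed.

End Aux.

Theorem mainTheorem1 (R : realType) (X : ptopologicalType)
  (mu : {measure set (g_sigma_algebraType (@open X)) -> \bar R})
  (D A B : set X) (f : X -> X -> R) :
  compact D ->
  closed A -> closed B -> A !=set0 -> B !=set0 -> A `&` B = set0 ->
  A `<=` D -> B `<=` D -> (exists2 x, D x & ~ (A `|` B) x) ->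
  (* (i) *)
  (forall x y, D x -> D y -> 0 <= f x y) ->
  (forall x y, B x -> D y -> f x y = 0) ->
  (forall x y, D x -> A y -> f x y = 0) ->
  (* (ii) *)
  (forall x, D x -> f x x = 0) ->
  (* (iii) *)
  (forall x, (D `\` (A `|` B)) x ->
     (\int[mu]_(y in (D : set (g_sigma_algebraType (@open X)))) (f x y)%:E
      = \int[mu]_(y in (D : set (g_sigma_algebraType (@open X)))) (f y x)%:E)%E) ->
  (* (iv) *)
  bounded_on_DxD D f -> piecewise_continuous_on_DxD D f ->
  AB_connected D A B f (Lset D f (competency D A B f)) ->
  forall (z : R), 0 < z -> z <= competency D A B f ->
  forall (Nz : nat), is_Nz D A B f z Nz ->
  forall (n : nat), (Nz <= n)%N ->
  forall (i : 'I_n.+1),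
    W D A B f z n i = (fun w : 'I_n.+1 -> X => w i) @` Gpaths D A B f n (Lset D f z).
Proof.
move=> _ _ _ _ _ _ AD _ _ _ _ _ _ _ _ _ _ z z0 _ _ _ n _ i.
have iln : (i <= n)%N by rewrite -ltnS.
apply/seteqP; split => x /=.
- rewrite /W => /wrec_path [Px [h [h0 Bh Hh]]].
  have := phin_path _ _ _ _ _ _ Px; rewrite subKn // => -[g [Ag gi Hg]].
  pose p := fun j => if (j <= i)%N then g j else h (j - i)%N.
  have pr : forall j, (i <= j)%N -> p j = h (j - i)%N.
    move=> j ij; rewrite /p; case: leqP => // ji.
    have -> : j = i by apply/eqP; rewrite eqn_leq ji ij.
    by rewrite subnn h0 gi.
  have Hp : forall j, (j < n)%N -> Lset D f z (p j, p j.+1).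
    move=> j jn; case: (ltnP j i) => ji.
      by rewrite /p ji (ltnW ji); apply: Hg.
    rewrite pr // pr ?(leqW ji) // subSn //; apply: Hh.
    by rewrite ltn_sub2r // (leq_ltn_trans ji).
  exists (fun k : 'I_n.+1 => p k).
    by apply: nat_to_G => //; rewrite pr.
  by rewrite /p leqnn.
- case=> w Gw <-.
  have [p0 pn Hp] := G_to_nat _ _ _ _ _ _ _ Gw.
  rewrite /W -[w i](_ : w (inord i) = w i); last by rewrite inord_val.
  by apply: (path_wrec _ _ _ _ _ _ (fun j => w (inord j))); rewrite // subnKC.
Qed.
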